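(* In the setting described in the context, every $(x_1,x_2,y_1,y_2)\in S(q,\kappa)$ satisfies \[\kappa^2a_1x_2y_1+a_2x_2y_2\equiv 0\pmod q,\] \[2a_2x_1y_1+\kappa^3a_1x_2y_1+3\kappa a_2x_2y_2\equiv 0\pmod{q^2},\] \[5\kappa^2a_1a_2x_1y_1+a_2^2x_1y_2+\kappa^5a_1^2x_2y_1+5\kappa^3a_1a_2x_2y_2\equiv 0\pmod{q^3}.\] Conversely, if $(x_1,x_2,y_1,y_2)\in\mathbb{Z}^4$ satisfies the two congruences \[a_2x_1\equiv\kappa^3a_1x_2\pmod q,\qquad \kappa^2a_1y_1+a_2y_2\equiv 0\pmod q,\] together with the three congruences displayed above, and $r=\gcd(y_1,y_2,q)$, then \[18(a_1x_1^2y_1^3+a_2x_2^2y_2^3)\equiv 0\pmod{q^3r^2}.\]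
   Context: Let $a_1,a_2,a_3$ be non-zero square-free pairwise coprime integers, let $B\ge 2$, and let $X_1,X_2,X_3,Y_1,Y_2,Y_3$ be powers of 2 not exceeding $2B$ with $X_i^2Y_i^3\le 32B/|a_i|$ for $i=1,2,3$. Let $S_0(B)$ be the set of 6-tuples of positive integers $(x_1,x_2,x_3,y_1,y_2,y_3)$ with $\tfrac12X_i<x_i\le X_i$ and $\tfrac12Y_i<y_i\le Y_i$ ($i=1,2,3$), satisfying $a_1x_1^2y_1^3+a_2x_2^2y_2^3+a_3x_3^2y_3^3=0$, $\gcd(x_1y_1,x_2y_2,x_3y_3)=\gcd(a_1a_2a_3,x_1x_2x_3y_1y_2y_3)=1$, and with $a_1y_1,a_2y_2,a_3y_3$ square-free. Let $q$ be a square-free integer with $\tfrac12Y_3<q\le Y_3$ and $\gcd(q,a_1a_2)=1$, and let $\kappa$ be an integer with $\gcd(\kappa,q)=1$. Define $S(q,\kappa)$ as the set of $(x_1,x_2,y_1,y_2)\in\mathbb{Z}^4$ with $x_1y_1+\kappa x_2y_2\equiv 0\pmod q$ such that $(x_1,x_2,x_3,y_1,y_2,q)\in S_0(B)$ for some integer $x_3$. *)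

(* Defs.v *)
From HB Require Import structures.
From mathcomp Require Import all_boot all_order all_algebra.
From mathcomp Require Import reals.
Set Implicit Arguments. Unset Strict Implicit. Unset Printing Implicit Defensive.
Import Order.TTheory GRing.Theory Num.Theory.
Local Open Scope ring_scope.

Definition sqfree (z : int) : Prop :=
  z != 0 /\ forall p : nat, prime p -> ~ ((p ^ 2)%:Z %| z)%Z.

Definition pow2 (X : nat) : Prop := exists k : nat, X = (2 ^ k)%N.

(* The set S_0(B): membership of (x1,x2,x3,y1,y2,y3), for fixed
   a1 a2 a3, B and boxes X_i, Y_i.  "1/2 X < x" is written X < 2 x. *)
Definition S0 (R : realType) (a1 a2 a3 : int) (B : R)
    (X1 X2 X3 Y1 Y2 Y3 : nat) (x1 x2 x3 y1 y2 y3 : int) : Prop :=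
  [/\ 0 < x1, 0 < x2, 0 < x3, 0 < y1 & 0 < y2] /\ 0 < y3 /\
  [/\ X1%:Z < 2 * x1, x1 <= X1%:Z, X2%:Z < 2 * x2 & x2 <= X2%:Z] /\
  [/\ X3%:Z < 2 * x3 & x3 <= X3%:Z] /\
  [/\ Y1%:Z < 2 * y1, y1 <= Y1%:Z, Y2%:Z < 2 * y2 & y2 <= Y2%:Z] /\
  [/\ Y3%:Z < 2 * y3 & y3 <= Y3%:Z] /\
  a1 * x1 ^+ 2 * y1 ^+ 3 + a2 * x2 ^+ 2 * y2 ^+ 3 + a3 * x3 ^+ 2 * y3 ^+ 3 = 0 /\
  gcdz (gcdz (x1 * y1) (x2 * y2)) (x3 * y3) = 1 /\
  gcdz (a1 * a2 * a3) (x1 * x2 * x3 * y1 * y2 * y3) = 1 /\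
  [/\ sqfree (a1 * y1), sqfree (a2 * y2) & sqfree (a3 * y3)].

Definition Sqk (R : realType) (a1 a2 a3 : int) (B : R)
    (X1 X2 X3 Y1 Y2 Y3 : nat) (q kappa : int) (x1 x2 y1 y2 : int) : Prop :=
  (q %| x1 * y1 + kappa * x2 * y2)%Z /\
  exists x3 : int, S0 a1 a2 a3 B X1 X2 X3 Y1 Y2 Y3 x1 x2 x3 y1 y2 q.

(* Main.v *)
Require Import Defs.
From HB Require Import structures.
From mathcomp Require Import all_boot all_order all_algebra.
From mathcomp Require Import reals.
Import Order.TTheory GRing.Theory Num.Theory.
Local Open Scope ring_scope.

From mathcomp Require Import ring.

Lemma cop_dvd {d m n : int} : (d %| m)%Z -> coprimez m n -> coprimez d n.
Proof. rewrite /coprimez /gcdz dvdzE => h; exact: coprime_dvdl. Qed.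

Lemma cop_of {m n z : int} : z = 1 -> (gcdz m n %| z)%Z -> coprimez m n.
Proof. by move=> ->; rewrite /coprimez dvdz1 /gcdz absz_nat. Qed.

Lemma gaussz {m a b : int} : coprimez a m -> (m %| a * b)%Z -> (m %| b)%Z.
Proof. by rewrite coprimez_sym => h; rewrite Gauss_dvdzr. Qed.

Lemma dvd_wit {d m : int} : (d %| m)%Z -> exists k, m = k * d.
Proof. by move/dvdzP. Qed.

Lemma wit_dvd {d m k : int} : m = k * d -> (d %| m)%Z.
Proof. by move=> ->; apply/dvdzP; exists k. Qed.

Lemma dvd_subl {d a b : int} : (d %| a + d * b)%Z -> (d %| a)%Z.
Proof. by move=> h; have := dvdz_mull b (dvdzz d); rewrite mulrC => h2; rewrite -(rpredDr _ h2). Qed.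
Lemma part1 (a1 a2 k q x1 x2 y1 y2 : int) :
  q != 0 -> coprimez (x2*y2) q -> coprimez y1 q -> coprimez y2 q ->
  (q %| x1 * y1 + k * x2 * y2)%Z ->
  (q ^+ 3 %| a1 * x1 ^+ 2 * y1 ^+ 3 + a2 * x2 ^+ 2 * y2 ^+ 3)%Z ->
     [/\ (q %| k ^+ 2 * a1 * x2 * y1 + a2 * x2 * y2)%Z,
         (q ^+ 2 %| 2 * a2 * x1 * y1 + k ^+ 3 * a1 * x2 * y1
                     + 3 * k * a2 * x2 * y2)%Z &
         (q ^+ 3 %| 5 * k ^+ 2 * a1 * a2 * x1 * y1 + a2 ^+ 2 * x1 * y2
                     + k ^+ 5 * a1 ^+ 2 * x2 * y1
                     + 5 * k ^+ 3 * a1 * a2 * x2 * y2)%Z].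
Proof.
move=> q0 cv c1 c2 /dvd_wit[t Ht] /dvd_wit[n Hn].
have Hu : x1 * y1 = t * q - k * (x2 * y2) by rewrite -Ht; ring.
have eF : a1 * x1 ^+ 2 * y1 ^+ 3 + a2 * x2 ^+ 2 * y2 ^+ 3
   = a1 * y1 * (x1 * y1) ^+ 2 + a2 * y2 * (x2 * y2) ^+ 2 by ring.
have /dvd_wit[s Hs0] : (q %| k ^+ 2 * a1 * y1 + a2 * y2)%Z.
  apply: (gaussz (coprimezXl 2 cv)).
  apply: (wit_dvd (k := n * q ^+ 2 - a1 * y1 * (t ^+ 2 * q - 2 * t * k * (x2 * y2)))).
  have -> : (x2 * y2) ^+ 2 * (k ^+ 2 * a1 * y1 + a2 * y2) =
     (a1 * x1 ^+ 2 * y1 ^+ 3 + a2 * x2 ^+ 2 * y2 ^+ 3)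
     - a1 * y1 * ((x1 * y1) ^+ 2 - k ^+ 2 * (x2 * y2) ^+ 2) by ring.
  rewrite Hn Hu; ring.
have Hs : a2 * y2 = s * q - k ^+ 2 * a1 * y1 by rewrite -Hs0; ring.
have eF2 : a1 * x1 ^+ 2 * y1 ^+ 3 + a2 * x2 ^+ 2 * y2 ^+ 3 =
   q * (q * (a1 * y1 * t ^+ 2) + x2 * y2 * (x2 * y2 * s - 2 * k * a1 * y1 * t)).
  rewrite eF Hu Hs; ring.
have /dvd_wit[w Hw0] : (q %| x2 * y2 * s - 2 * k * a1 * y1 * t)%Z.
  apply: (gaussz cv); apply: (@dvd_subl _ _ (a1 * y1 * t ^+ 2)).
  rewrite -(@dvdz_mul2l q _ _ q0) addrC -eF2 -expr2.
  apply: (dvdz_trans _ (wit_dvd Hn)); exact: dvdz_exp2l.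
have Hw : x2 * y2 * s = w * q + 2 * k * a1 * y1 * t by rewrite -Hw0; ring.
have eF3 : a1 * x1 ^+ 2 * y1 ^+ 3 + a2 * x2 ^+ 2 * y2 ^+ 3 =
   q ^+ 2 * (a1 * y1 * t ^+ 2 + x2 * y2 * w).
  rewrite eF2 Hw0; ring.
have /dvd_wit[z Hz0] : (q %| a1 * y1 * t ^+ 2 + x2 * y2 * w)%Z.
  have q2 : q ^+ 2 != 0 by rewrite expf_neq0.
  rewrite -(@dvdz_mul2l (q ^+ 2) _ _ q2) -eF3 -exprSr; apply: (wit_dvd Hn).
have Hvw : x2 * y2 * w = z * q - a1 * y1 * t ^+ 2 by rewrite -Hz0; ring.
have /dvd_wit[g Hg0] : (q %| 2 * a2 * t + k * x2 * s)%Z.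
  apply: (gaussz c2); apply: (wit_dvd (k := 2 * t * s + k * w)).
  have -> : y2 * (2 * a2 * t + k * x2 * s) = 2 * t * (a2 * y2) + k * (x2 * y2 * s) by ring.
  rewrite Hs Hw; ring.
split.
- apply: (wit_dvd (k := x2 * s)).
  have -> : k ^+ 2 * a1 * x2 * y1 + a2 * x2 * y2 = x2 * (k ^+ 2 * a1 * y1 + a2 * y2) by ring.
  rewrite Hs0; ring.
- apply: (wit_dvd (k := g)).
  have -> : 2 * a2 * x1 * y1 + k ^+ 3 * a1 * x2 * y1 + 3 * k * a2 * x2 * y2
     = 2 * a2 * (x1 * y1 + k * x2 * y2) + k * x2 * (k ^+ 2 * a1 * y1 + a2 * y2) by ring.
  rewrite Ht Hs0.
  have -> : 2 * a2 * (t * q) + k * x2 * (s * q) = q * (2 * a2 * t + k * x2 * s) by ring.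
  rewrite Hg0; ring.
- set E3 := (X in (_ %| X)%Z).
  have eE : y1 * E3 = q * (q * ((a2 * t - k * x2 * s) * s) + 2 * k ^+ 2 * a1 * y1 * (g * q)).
    rewrite -Hg0.
    have -> : y1 * E3 = (5 * k ^+ 2 * a1 * a2 * y1 + a2 * (a2 * y2)) * (x1 * y1 + k * x2 * y2)
       + k * x2 * (k ^+ 2 * a1 * y1 - a2 * y2) * (k ^+ 2 * a1 * y1 + a2 * y2) by rewrite /E3; ring.
    rewrite Ht Hs; ring.
  set Bq := (q * _ + _) in eE.
  have eB : Bq = q * ((a2 * t - k * x2 * s) * s + 2 * k ^+ 2 * a1 * y1 * g) by rewrite /Bq; ring.
  have Hyg : y2 * g = 2 * t * s + k * w.
    apply: (mulfI q0).
    have -> : q * (y2 * g) = y2 * (g * q) by ring.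
    rewrite -Hg0.
    have -> : y2 * (2 * a2 * t + k * x2 * s) = 2 * t * (a2 * y2) + k * (x2 * y2 * s) by ring.
    rewrite Hs Hw; ring.
  have /dvd_wit[b Hb] : (q %| (a2 * t - k * x2 * s) * s + 2 * k ^+ 2 * a1 * y1 * g)%Z.
    apply: (gaussz c2); apply: (gaussz cv).
    apply: (wit_dvd (k := x2 * y2 * t * s ^+ 2 - k * w ^+ 2 * q - k ^+ 2 * a1 * y1 * t * w + 2 * k ^+ 3 * a1 * y1 * z)).
    have -> : x2 * y2 * (y2 * ((a2 * t - k * x2 * s) * s + 2 * k ^+ 2 * a1 * y1 * g))
      = x2 * y2 * (t * s * (a2 * y2) - k * s * (x2 * y2 * s) + 2 * k ^+ 2 * a1 * y1 * (y2 * g)) by ring.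
    rewrite Hs Hyg.
    have -> : x2 * y2 * (t * s * (s * q - k ^+ 2 * a1 * y1) - k * s * (x2 * y2 * s) +
      2 * k ^+ 2 * a1 * y1 * (2 * t * s + k * w)) =
      x2 * y2 * t * s ^+ 2 * q - k * (x2 * y2 * s) * (x2 * y2 * s)
      + 3 * k ^+ 2 * a1 * y1 * t * (x2 * y2 * s) + 2 * k ^+ 3 * a1 * y1 * (x2 * y2 * w) by ring.
    rewrite Hw Hvw; ring.
  have c3 : coprimez y1 (q ^+ 3) by apply: coprimezXr.
  apply: (gaussz c3); apply: (wit_dvd (k := b)).
  rewrite eE eB Hb; ring.
Qed.
Lemma sqf_cop (a b : int) : sqfree (a * b) -> coprimez a b.
Proof.
case=> nz hp; rewrite /coprimez /gcdz.
have a0 : a != 0 by apply: contraNneq nz => ->; rewrite mul0r.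
have b0 : b != 0 by apply: contraNneq nz => ->; rewrite mulr0.
set n := gcdn `|a| `|b|.
have n0 : (0 < n)%N by rewrite gcdn_gt0 absz_gt0 a0.
case: (ltngtP n 1) => [|h1|->] //; first by rewrite ltnS leqn0 => /eqP e; rewrite e in n0.
have pp := pdiv_prime h1.
exfalso; apply: (hp _ pp).
rewrite dvdzE abszM absz_nat.
apply: (@dvdn_trans (n * n)).
  by rewrite expnS expn1 dvdn_mul // pdiv_dvd.
by rewrite dvdn_mul // /n ?dvdn_gcdl ?dvdn_gcdr.
Qed.
Lemma part2a (a1 a2 k q x1 x2 y1 y2 : int) :
  q != 0 -> coprimez a2 q ->
     (q %| a2 * x1 - k ^+ 3 * a1 * x2)%Z ->
     (q %| k ^+ 2 * a1 * y1 + a2 * y2)%Z ->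
     (q ^+ 2 %| 2 * a2 * x1 * y1 + k ^+ 3 * a1 * x2 * y1
                 + 3 * k * a2 * x2 * y2)%Z ->
     (q ^+ 3 %| 5 * k ^+ 2 * a1 * a2 * x1 * y1 + a2 ^+ 2 * x1 * y2
                 + k ^+ 5 * a1 ^+ 2 * x2 * y1
                 + 5 * k ^+ 3 * a1 * a2 * x2 * y2)%Z ->
     (q ^+ 3 %| 2 * (a1 * x1 ^+ 2 * y1 ^+ 3 + a2 * x2 ^+ 2 * y2 ^+ 3))%Z.
Proof.
move=> q0 ca /dvd_wit[c Hc] /dvd_wit[s Hs] HE2 HE3.
have HP : a2 * x1 = c * q + k ^+ 3 * a1 * x2 by rewrite -Hc; ring.
have HQ : a2 * y2 = s * q - k ^+ 2 * a1 * y1 by rewrite -Hs; ring.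
have /dvd_wit[e He] : (q %| 2 * c * y1 + 3 * k * x2 * s)%Z.
  rewrite -(@dvdz_mul2l q _ _ q0) -expr2.
  suff <- : 2 * a2 * x1 * y1 + k ^+ 3 * a1 * x2 * y1 + 3 * k * a2 * x2 * y2
     = q * (2 * c * y1 + 3 * k * x2 * s) by [].
  have -> : 2 * a2 * x1 * y1 + k ^+ 3 * a1 * x2 * y1 + 3 * k * a2 * x2 * y2
     = 2 * y1 * (a2 * x1) + k ^+ 3 * a1 * x2 * y1 + 3 * k * x2 * (a2 * y2) by ring.
  rewrite HP HQ; ring.
have /dvd_wit[f Hf] : (q %| 2 * k ^+ 2 * a1 * e + c * s)%Z.
  have q2 : q ^+ 2 != 0 by rewrite expf_neq0.
  rewrite -(@dvdz_mul2l (q ^+ 2) _ _ q2) -exprSr.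
  suff <- : 5 * k ^+ 2 * a1 * a2 * x1 * y1 + a2 ^+ 2 * x1 * y2
                 + k ^+ 5 * a1 ^+ 2 * x2 * y1
                 + 5 * k ^+ 3 * a1 * a2 * x2 * y2 = q ^+ 2 * (2 * k ^+ 2 * a1 * e + c * s) by [].
  have -> : q ^+ 2 * (2 * k ^+ 2 * a1 * e + c * s) = q * (q * (c * s) + 2 * k ^+ 2 * a1 * (e * q)) by ring.
  rewrite -He.
  have -> : 5 * k ^+ 2 * a1 * a2 * x1 * y1 + a2 ^+ 2 * x1 * y2
                 + k ^+ 5 * a1 ^+ 2 * x2 * y1
                 + 5 * k ^+ 3 * a1 * a2 * x2 * y2 =
     5 * (k ^+ 2 * a1 * y1) * (a2 * x1) + (a2 * x1) * (a2 * y2) + (k ^+ 3 * a1 * x2) * (k ^+ 2 * a1 * y1)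
     + 5 * (k ^+ 3 * a1 * x2) * (a2 * y2) by ring.
  rewrite HP HQ; ring.
set B := k ^+ 3 * a1 * x2 * y1 * e + y1 ^+ 2 * c ^+ 2 - 3 * k ^+ 2 * x2 ^+ 2 * s ^+ 2.
have e1 : a2 ^+ 2 * (2 * (a1 * x1 ^+ 2 * y1 ^+ 3 + a2 * x2 ^+ 2 * y2 ^+ 3))
   = q ^+ 2 * (a1 * y1 * (2 * B)) + 2 * q ^+ 3 * x2 ^+ 2 * s ^+ 3.
  have -> : q ^+ 2 * (a1 * y1 * (2 * B)) = q * (2 * a1 ^+ 2 * k ^+ 3 * x2 * y1 ^+ 2 * (e * q))
     + q ^+ 2 * (a1 * y1 * (2 * y1 ^+ 2 * c ^+ 2 - 6 * k ^+ 2 * x2 ^+ 2 * s ^+ 2)) by rewrite /B; ring.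
  rewrite -He.
  have -> : a2 ^+ 2 * (2 * (a1 * x1 ^+ 2 * y1 ^+ 3 + a2 * x2 ^+ 2 * y2 ^+ 3))
     = 2 * (a1 * y1 ^+ 3 * (a2 * x1) ^+ 2 + x2 ^+ 2 * (a2 * y2) ^+ 3) by ring.
  rewrite HP HQ; ring.
have e2 : 2 * B = q * (k * x2 * y1 * f + y1 * c * e - 2 * k * x2 * s * e).
  have -> : 2 * B = k * x2 * y1 * (2 * k ^+ 2 * a1 * e + c * s) + y1 * c * (2 * c * y1 + 3 * k * x2 * s)
     - 2 * k * x2 * s * (2 * c * y1 + 3 * k * x2 * s) by rewrite /B; ring.
  rewrite Hf He; ring.
apply: (gaussz (coprimezXl 2 (coprimezXr 3 ca))).
apply: (wit_dvd (k := a1 * y1 * (k * x2 * y1 * f + y1 * c * e - 2 * k * x2 * s * e) + 2 * x2 ^+ 2 * s ^+ 3)).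
rewrite e1 e2; ring.
Qed.
Lemma part2b (a1 a2 k r x1 x2 Y1 Y2 : int) :
  r != 0 -> coprimez k r -> coprimez a1 r -> coprimez a2 r ->
     (r %| a2 * x1 - k ^+ 3 * a1 * x2)%Z ->
     (r ^+ 2 %| 2 * a2 * x1 * (Y1 * r) + k ^+ 3 * a1 * x2 * (Y1 * r)
                 + 3 * k * a2 * x2 * (Y2 * r))%Z ->
     (r ^+ 3 %| 5 * k ^+ 2 * a1 * a2 * x1 * (Y1 * r) + a2 ^+ 2 * x1 * (Y2 * r)
                 + k ^+ 5 * a1 ^+ 2 * x2 * (Y1 * r)
                 + 5 * k ^+ 3 * a1 * a2 * x2 * (Y2 * r))%Z ->
     (r ^+ 2 %| 18 * (a1 * x1 ^+ 2 * Y1 ^+ 3 + a2 * x2 ^+ 2 * Y2 ^+ 3))%Z.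
Proof.
move=> r0 ck c1 c2 /dvd_wit[c Hc] HE2 HE3.
have HP : a2 * x1 = c * r + k ^+ 3 * a1 * x2 by rewrite -Hc; ring.
set d := k ^+ 2 * a1 * Y1 + a2 * Y2.
have /dvd_wit[h Hh] : (r %| 3 * x2 * d)%Z.
  apply: (gaussz ck).
  apply: (@dvd_subl _ _ (2 * c * Y1)); rewrite addrC.
  rewrite -(@dvdz_mul2l r _ _ r0) -expr2.
  suff <- : 2 * a2 * x1 * (Y1 * r) + k ^+ 3 * a1 * x2 * (Y1 * r) + 3 * k * a2 * x2 * (Y2 * r)
     = r * (r * (2 * c * Y1) + k * (3 * x2 * d)) by [].
  have -> : 2 * a2 * x1 * (Y1 * r) + k ^+ 3 * a1 * x2 * (Y1 * r) + 3 * k * a2 * x2 * (Y2 * r)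
     = r * (2 * Y1 * (a2 * x1) + k ^+ 3 * a1 * x2 * Y1 + 3 * k * x2 * (a2 * Y2)) by ring.
  rewrite HP /d; ring.
have /dvd_wit[m0 Hm0] : (r %| 2 * k ^+ 3 * a1 * h + 4 * (k ^+ 2 * a1 * Y1) * c + c * d)%Z.
  have r2 : r ^+ 2 != 0 by rewrite expf_neq0.
  rewrite -(@dvdz_mul2l (r ^+ 2) _ _ r2) -exprSr.
  suff <- : 5 * k ^+ 2 * a1 * a2 * x1 * (Y1 * r) + a2 ^+ 2 * x1 * (Y2 * r)
                 + k ^+ 5 * a1 ^+ 2 * x2 * (Y1 * r)
                 + 5 * k ^+ 3 * a1 * a2 * x2 * (Y2 * r)
       = r ^+ 2 * (2 * k ^+ 3 * a1 * h + 4 * (k ^+ 2 * a1 * Y1) * c + c * d) by [].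
  have -> : r ^+ 2 * (2 * k ^+ 3 * a1 * h + 4 * (k ^+ 2 * a1 * Y1) * c + c * d)
     = r * (2 * k ^+ 3 * a1 * (h * r) + r * (4 * (k ^+ 2 * a1 * Y1) * c + c * d)) by ring.
  rewrite -Hh.
  have -> : 5 * k ^+ 2 * a1 * a2 * x1 * (Y1 * r) + a2 ^+ 2 * x1 * (Y2 * r)
                 + k ^+ 5 * a1 ^+ 2 * x2 * (Y1 * r)
                 + 5 * k ^+ 3 * a1 * a2 * x2 * (Y2 * r) =
     r * (5 * (k ^+ 2 * a1 * Y1) * (a2 * x1) + (a2 * x1) * (a2 * Y2) + (k ^+ 3 * a1 * x2) * (k ^+ 2 * a1 * Y1)
     + 5 * (k ^+ 3 * a1 * x2) * (a2 * Y2)) by ring.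
  rewrite HP /d; ring.
have /dvd_wit[m Hm] : (r %| 6 * x2 * (k * h + 2 * Y1 * c))%Z.
  have ck2 : coprimez (k ^+ 2 * a1) r by rewrite coprimezMl (coprimezXl 2 ck) c1.
  apply: (gaussz ck2); apply: (wit_dvd (k := 3 * x2 * m0 - c * h)).
  have -> : k ^+ 2 * a1 * (6 * x2 * (k * h + 2 * Y1 * c)) =
    3 * x2 * (2 * k ^+ 3 * a1 * h + 4 * (k ^+ 2 * a1 * Y1) * c + c * d) - c * (3 * x2 * d) by rewrite /d; ring.
  rewrite Hm0 Hh; ring.
have I1 : a2 ^+ 2 * (18 * (a1 * x1 ^+ 2 * Y1 ^+ 3 + a2 * x2 ^+ 2 * Y2 ^+ 3)) =
  18 * a1 * Y1 ^+ 3 * (2 * (k ^+ 3 * a1 * x2) * c * r + c ^+ 2 * r ^+ 2)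
  + 18 * x2 * (k ^+ 2 * a1 * Y1) ^+ 2 * (h * r) - 6 * (k ^+ 2 * a1 * Y1) * (h * r) ^+ 2
  + 2 * d * (h * r) ^+ 2.
  rewrite -Hh.
  have -> : a2 ^+ 2 * (18 * (a1 * x1 ^+ 2 * Y1 ^+ 3 + a2 * x2 ^+ 2 * Y2 ^+ 3)) =
    18 * (a1 * Y1 ^+ 3 * (a2 * x1) ^+ 2 + x2 ^+ 2 * (a2 * Y2) ^+ 3) by ring.
  rewrite HP /d; ring.
have ca : coprimez (a2 ^+ 2) (r ^+ 2) by apply: coprimezXl; apply: coprimezXr.
apply: (gaussz ca).
apply: (wit_dvd (k := 3 * k ^+ 3 * a1 ^+ 2 * Y1 ^+ 2 * m + 18 * a1 * Y1 ^+ 3 * c ^+ 2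
   - 6 * (k ^+ 2 * a1 * Y1) * h ^+ 2 + 2 * d * h ^+ 2)).
rewrite I1.
have -> : 18 * a1 * Y1 ^+ 3 * (2 * (k ^+ 3 * a1 * x2) * c * r + c ^+ 2 * r ^+ 2)
  + 18 * x2 * (k ^+ 2 * a1 * Y1) ^+ 2 * (h * r) - 6 * (k ^+ 2 * a1 * Y1) * (h * r) ^+ 2
  + 2 * d * (h * r) ^+ 2 = r * (3 * k ^+ 3 * a1 ^+ 2 * Y1 ^+ 2 * (6 * x2 * (k * h + 2 * Y1 * c)))
  + r ^+ 2 * (18 * a1 * Y1 ^+ 3 * c ^+ 2 - 6 * (k ^+ 2 * a1 * Y1) * h ^+ 2 + 2 * d * h ^+ 2) by ring.
rewrite Hm; ring.
Qed.

Theorem lemma13 (R : realType) (a1 a2 a3 : int) (B : R)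
    (X1 X2 X3 Y1 Y2 Y3 : nat) (q kappa : int)
    (ha1 : sqfree a1) (ha2 : sqfree a2) (ha3 : sqfree a3)
    (hc12 : coprimez a1 a2) (hc13 : coprimez a1 a3) (hc23 : coprimez a2 a3)
    (hB : 2 <= B)
    (hX1 : pow2 X1) (hX2 : pow2 X2) (hX3 : pow2 X3)
    (hY1 : pow2 Y1) (hY2 : pow2 Y2) (hY3 : pow2 Y3)
    (hX1B : X1%:R <= 2 * B) (hX2B : X2%:R <= 2 * B) (hX3B : X3%:R <= 2 * B)
    (hY1B : Y1%:R <= 2 * B) (hY2B : Y2%:R <= 2 * B) (hY3B : Y3%:R <= 2 * B)
    (hXY1 : ((X1 ^ 2 * Y1 ^ 3)%N)%:R <= 32 * B / `|a1%:~R|)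
    (hXY2 : ((X2 ^ 2 * Y2 ^ 3)%N)%:R <= 32 * B / `|a2%:~R|)
    (hXY3 : ((X3 ^ 2 * Y3 ^ 3)%N)%:R <= 32 * B / `|a3%:~R|)
    (hq : sqfree q) (hqY : Y3%:Z < 2 * q) (hqY' : q <= Y3%:Z)
    (hqa : coprimez q (a1 * a2)) (hkq : coprimez kappa q) :
  (forall x1 x2 y1 y2 : int,
     Sqk a1 a2 a3 B X1 X2 X3 Y1 Y2 Y3 q kappa x1 x2 y1 y2 ->
     [/\ (q %| kappa ^+ 2 * a1 * x2 * y1 + a2 * x2 * y2)%Z,
         (q ^+ 2 %| 2 * a2 * x1 * y1 + kappa ^+ 3 * a1 * x2 * y1
                     + 3 * kappa * a2 * x2 * y2)%Z &
         (q ^+ 3 %| 5 * kappa ^+ 2 * a1 * a2 * x1 * y1 + a2 ^+ 2 * x1 * y2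
                     + kappa ^+ 5 * a1 ^+ 2 * x2 * y1
                     + 5 * kappa ^+ 3 * a1 * a2 * x2 * y2)%Z])
  /\
  (forall x1 x2 y1 y2 : int,
     (q %| a2 * x1 - kappa ^+ 3 * a1 * x2)%Z ->
     (q %| kappa ^+ 2 * a1 * y1 + a2 * y2)%Z ->
     (q %| kappa ^+ 2 * a1 * x2 * y1 + a2 * x2 * y2)%Z ->
     (q ^+ 2 %| 2 * a2 * x1 * y1 + kappa ^+ 3 * a1 * x2 * y1
                 + 3 * kappa * a2 * x2 * y2)%Z ->
     (q ^+ 3 %| 5 * kappa ^+ 2 * a1 * a2 * x1 * y1 + a2 ^+ 2 * x1 * y2
                 + kappa ^+ 5 * a1 ^+ 2 * x2 * y1
                 + 5 * kappa ^+ 3 * a1 * a2 * x2 * y2)%Z ->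
     (q ^+ 3 * (gcdz (gcdz y1 y2) q) ^+ 2
        %| 18 * (a1 * x1 ^+ 2 * y1 ^+ 3 + a2 * x2 ^+ 2 * y2 ^+ 3))%Z).
Proof.
Proof.
have q0 : q != 0 by case: hq.
split.
- move=> x1 x2 y1 y2 [Hdiv [x3 HS]].
  case: HS => _ [_ [_ [_ [_ [_ [Heq [Hg _]]]]]]].
  have HF : (q ^+ 3 %| a1 * x1 ^+ 2 * y1 ^+ 3 + a2 * x2 ^+ 2 * y2 ^+ 3)%Z.
    apply: (wit_dvd (k := - (a3 * x3 ^+ 2))).
    have -> : a1 * x1 ^+ 2 * y1 ^+ 3 + a2 * x2 ^+ 2 * y2 ^+ 3 = - (a3 * x3 ^+ 2 * q ^+ 3).
      by apply/eqP; rewrite -addr_eq0; apply/eqP.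
    ring.
  have ex1 : x1 * y1 = (x1 * y1 + kappa * x2 * y2) - kappa * (x2 * y2) by ring.
  have cv : coprimez (x2 * y2) q.
    apply: (cop_of Hg); rewrite !dvdz_gcd dvdz_gcdl /= andbT.
    apply/andP; split; last by apply: dvdz_mull; exact: dvdz_gcdr.
    rewrite ex1; apply: rpredB; first exact: (dvdz_trans (dvdz_gcdr _ _) Hdiv).
    by apply: dvdz_mull; exact: dvdz_gcdl.
  have cu : coprimez (x1 * y1) q.
    have ckv : coprimez (kappa * (x2 * y2)) q by rewrite coprimezMl hkq cv.
    apply: (cop_of (eqP ckv)).
    rewrite dvdz_gcd dvdz_gcdr andbT.
    have -> : kappa * (x2 * y2) = (x1 * y1 + kappa * x2 * y2) - x1 * y1 by ring.
    apply: rpredB; first exact: (dvdz_trans (dvdz_gcdr _ _) Hdiv).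
    exact: dvdz_gcdl.
  have c1 : coprimez y1 q by move: cu; rewrite coprimezMl => /andP[].
  have c2 : coprimez y2 q by move: cv; rewrite coprimezMl => /andP[].
  exact: (part1 _ _ _ _ _ _ _ _ q0 cv c1 c2 Hdiv HF).
- move=> x1 x2 y1 y2 C1 C2 E1 E2 E3.
  have [cq1 cq2] : coprimez a1 q /\ coprimez a2 q.
    by move: hqa; rewrite coprimezMr => /andP[h1 h2]; rewrite !(coprimez_sym _ q) h1 h2.
  have Hq3 := part2a _ _ _ _ _ _ _ _ q0 cq2 C1 C2 E2 E3.
  set r := gcdz (gcdz y1 y2) q.
  have ry1 : (r %| y1)%Z by apply: dvdz_trans (dvdz_gcdl _ _) (dvdz_gcdl _ _).
  have ry2 : (r %| y2)%Z by apply: dvdz_trans (dvdz_gcdl _ _) (dvdz_gcdr _ _).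
  have rq : (r %| q)%Z by apply: dvdz_gcdr.
  have r0 : r != 0 by rewrite /r gcdz_eq0 negb_and q0 orbT.
  have cop_r : forall z, coprimez z q -> coprimez z r.
    by move=> z hz; rewrite coprimez_sym; apply: (cop_dvd rq); rewrite coprimez_sym.
  have C1r := dvdz_trans rq C1.
  have E2r := dvdz_trans (dvdz_exp2r 2 rq) E2.
  have E3r := dvdz_trans (dvdz_exp2r 3 rq) E3.
  clearbody r.
  case/dvd_wit: ry1 => Z1 HY1; case/dvd_wit: ry2 => Z2 HY2; case/dvd_wit: rq => q' Hq.
  rewrite HY1 HY2 in E2r E3r.
  have G2 := part2b _ _ _ _ _ _ _ _ r0 (cop_r _ hkq) (cop_r _ cq1) (cop_r _ cq2) C1r E2r E3r.
  have r3 : r ^+ 3 != 0 by rewrite expf_neq0.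
  have Gq : (q' ^+ 3 %| 2 * (a1 * x1 ^+ 2 * Z1 ^+ 3 + a2 * x2 ^+ 2 * Z2 ^+ 3))%Z.
    rewrite -(@dvdz_mul2l (r ^+ 3) _ _ r3).
    have -> : r ^+ 3 * q' ^+ 3 = q ^+ 3 by rewrite Hq; ring.
    have -> : r ^+ 3 * (2 * (a1 * x1 ^+ 2 * Z1 ^+ 3 + a2 * x2 ^+ 2 * Z2 ^+ 3))
      = 2 * (a1 * x1 ^+ 2 * y1 ^+ 3 + a2 * x2 ^+ 2 * y2 ^+ 3) by rewrite HY1 HY2; ring.
    exact: Hq3.
  have cqr : coprimez q' r by apply: sqf_cop; rewrite -Hq.
  rewrite Hq HY1 HY2.
  have -> : (q' * r) ^+ 3 * r ^+ 2 = r ^+ 3 * (q' ^+ 3 * r ^+ 2) by ring.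
  have -> : 18 * (a1 * x1 ^+ 2 * (Z1 * r) ^+ 3 + a2 * x2 ^+ 2 * (Z2 * r) ^+ 3)
     = r ^+ 3 * (18 * (a1 * x1 ^+ 2 * Z1 ^+ 3 + a2 * x2 ^+ 2 * Z2 ^+ 3)) by ring.
  rewrite (@dvdz_mul2l (r ^+ 3) _ _ r3).
  rewrite Gauss_dvdz; last by apply: coprimezXl; apply: coprimezXr.
  rewrite G2 andbT.
  have -> : 18 * (a1 * x1 ^+ 2 * Z1 ^+ 3 + a2 * x2 ^+ 2 * Z2 ^+ 3)
     = 9 * (2 * (a1 * x1 ^+ 2 * Z1 ^+ 3 + a2 * x2 ^+ 2 * Z2 ^+ 3)) by ring.
  exact: dvdz_mull.
Qed.
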